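(* Let $\gamma$ be a gauge on $\mathbb{R}^d$ with skewness $\sigma$ and $(D,w)$ a finite positively weighted set with total weight $w_D$. If $a\in\mathrm{CL}_\gamma(D,w)$, then $\mathrm{FW}_\gamma\big((D,w)+(a,w_D/\sigma)\big)=\{a\}$.
   Context: A gauge $\gamma$ on $\mathbb{R}^d$ is the Minkowski functional of a convex compact set $B_\gamma$ with the origin in its interior (not necessarily symmetric); its skewness is $\sigma=\sup_{x\ne0}\gamma(x)/\gamma(-x)$. $\mathrm{FW}_\gamma(S,u)$ is the set of minimizers of $x\mapsto\sum_{s\in S}u_s\gamma(x-s)$. $(D,w)+(C,v)$ denotes $D\cup C$ with weights added at common points; $(a,t)$ denotes the single point $a$ with weight $t$. The contamination locus is $\mathrm{CL}_\gamma(D,w)=\bigcup\mathrm{FW}_\gamma((D,w)+(C,v))$, the union over all nonempty finite positively weighted sets $(C,v)$ with $\sigma v_C<w_D$. *)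

(* Defs.v *)
From HB Require Import structures.
From mathcomp Require Import all_boot all_order all_algebra.
From mathcomp Require Import finmap.
From mathcomp Require Import all_classical all_reals all_analysis.
Set Implicit Arguments. Unset Strict Implicit. Unset Printing Implicit Defensive.
Import Order.TTheory GRing.Theory Num.Theory.
Import numFieldNormedType.Exports.
Local Open Scope classical_set_scope.
Local Open Scope ring_scope.

Section Gauge.
Variables (R : realType) (d : nat).
Notation V := 'rV[R]_d.

Definition convex_set_rV (B : set V) : Prop :=
  forall x y (t : R), B x -> B y -> 0 <= t <= 1 -> B (t *: x + (1 - t) *: y).

Definition gauge_body (B : set V) : Prop :=
  [/\ convex_set_rV B, compact B & (interior B) 0].

Definition minkowski_gauge (B : set V) (x : V) : R :=
  inf [set t : R | 0 < t /\ B (t^-1 *: x)].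

Definition skewness (g : V -> R) : R :=
  sup [set g x / g (- x) | x in [set x : V | x != 0]].

(* a finite weighted set is a pair (D, w), D : {fset V}, w : V -> R;
   it is positively weighted when w > 0 on D *)
Definition pos_weighted (D : {fset V}) (w : V -> R) : Prop :=
  forall x, x \in D -> 0 < w x.

Definition total_weight (D : {fset V}) (w : V -> R) : R :=
  \sum_(s <- D) w s.

Definition wsum_set (D C : {fset V}) : {fset V} := fsetU D C.
Definition wsum_weight (D : {fset V}) (w : V -> R) (C : {fset V}) (v : V -> R)
  : V -> R :=
  fun x => (if x \in D then w x else 0) + (if x \in C then v x else 0).

Definition FW (g : V -> R) (S : {fset V}) (u : V -> R) : set V :=
  [set x | forall y, \sum_(s <- S) u s * g (x - s) <= \sum_(s <- S) u s * g (y - s)].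

Definition CL (g : V -> R) (D : {fset V}) (w : V -> R) : set V :=
  [set x | exists (C : {fset V}) (v : V -> R),
     [/\ C != fset0, pos_weighted C v,
         skewness g * total_weight C v < total_weight D w &
         FW g (wsum_set D C) (wsum_weight D w C v) x]].

End Gauge.

(* Main.v *)
Require Import Defs.
From HB Require Import structures.
From mathcomp Require Import all_boot all_order all_algebra.
From mathcomp Require Import finmap.
From mathcomp Require Import all_classical all_reals all_analysis.
From mathcomp Require Import ring lra.
Import Order.TTheory GRing.Theory Num.Theory.
Import numFieldNormedType.Exports.
Local Open Scope classical_set_scope.
Local Open Scope ring_scope.
Set Implicit Arguments. Unset Strict Implicit.

Section G.
Variables (R : realType) (d : nat) (B : set 'rV[R]_d).
Hypothesis hB : gauge_body B.

Lemma gb_ball : exists r : R, 0 < r /\ forall x, `|x| < r -> B x.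
Proof.
case: hB => _ _ /nbhs_ballP [r r0 Hr]; exists r; split => // x Hx.
by apply: Hr; rewrite -ball_normE /= sub0r normrN.
Qed.

Lemma gb_bound : exists M : R, 0 < M /\ forall x, B x -> `|x| <= M.
Proof.
case: hB => _ /compact_bounded [M [_ HM]].
exists (`|M| + 1); split; first by rewrite ltr_wpDl.
move=> x Bx; apply: (HM (`|M| + 1)) => //.
by rewrite (le_lt_trans (ler_norm M)) // ltrDl.
Qed.

Let S (x : 'rV[R]_d) := [set t : R | 0 < t /\ B (t^-1 *: x)].
Let g := minkowski_gauge B.

Lemma S_ne x : S x !=set0.
Proof.
have [r [r0 Hr]] := gb_ball.
exists ((`|x| + 1) / r); split; first by rewrite divr_gt0 // ltr_wpDl.
apply: Hr; rewrite normrZ invfM invrK ger0_norm; last first.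
  by rewrite mulr_ge0 // ?invr_ge0 ltW // ltr_wpDl.
rewrite mulrC mulrA -[X in _ < X]mul1r ltr_pM2r // ltr_pdivrMr ?ltr_wpDl //.
by rewrite mul1r ltrDl.
Qed.

Lemma S_lb x : has_lbound (S x).
Proof. by exists 0 => t [/ltW]. Qed.

Lemma g_ge0 x : 0 <= g x.
Proof. by apply: lb_le_inf; [exact: S_ne | move=> t [/ltW]]. Qed.

Lemma g_le x t : 0 < t -> B (t^-1 *: x) -> g x <= t.
Proof. by move=> t0 Bt; apply: (ge_inf (S_lb x)). Qed.

Lemma g_lbound : exists M : R, 0 < M /\ forall x, `|x| / M <= g x.
Proof.
have [M [M0 HM]] := gb_bound; exists M; split => // x.
apply: lb_le_inf; first exact: S_ne.
move=> t [t0 /HM]; rewrite normrZ ger0_norm; last by rewrite invr_ge0 ltW.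
by rewrite ler_pdivrMr // -ler_pdivrMl.
Qed.

Lemma g_pos x : x != 0 -> 0 < g x.
Proof.
move=> x0; have [M [M0 HM]] := g_lbound.
by apply: lt_le_trans (HM x); rewrite divr_gt0 // normr_gt0.
Qed.

Lemma g_ubound : exists K : R, 0 < K /\ forall x, x != 0 -> g x <= `|x| * K.
Proof.
have [r [r0 Hr]] := gb_ball; exists (2 / r); split; first by rewrite divr_gt0.
move=> x x0; have nx : 0 < `|x| by rewrite normr_gt0.
apply: g_le; first by rewrite mulr_gt0 // divr_gt0.
apply: Hr; rewrite normrZ ger0_norm; last by rewrite invr_ge0 ltW // mulr_gt0 // divr_gt0.
rewrite invfM mulrC mulrA mulfV ?gt_eqF // mul1r invf_div.
by rewrite ltr_pdivrMr // ltr_pMr // ltr1n.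
Qed.

Lemma B0 : B 0.
Proof. by have [r [r0 Hr]] := gb_ball; apply: Hr; rewrite normr0. Qed.

Lemma g0 : g 0 = 0.
Proof.
apply/eqP; rewrite eq_le g_ge0 andbT leNgt; apply/negP => gp.
have : g 0 <= g 0 / 2 by apply: g_le; [rewrite divr_gt0 | rewrite scaler0; exact: B0].
lra.
Qed.

Lemma g_tri x y : g (x + y) <= g x + g y.
Proof.
have key : forall s t, S x s -> S y t -> g (x + y) <= s + t.
  move=> s t [s0 Bs] [t0 Bt]; apply: g_le; first by rewrite addr_gt0.
  case: hB => hconv _ _.
  have st0 : s + t != 0 by rewrite gt_eqF // addr_gt0.
  have e : (s + t)^-1 *: (x + y) =
      (s / (s + t)) *: (s^-1 *: x) + (1 - s / (s + t)) *: (t^-1 *: y).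
    rewrite !scalerA.
    have -> : s / (s + t) * s^-1 = (s + t)^-1.
      by field; rewrite st0 gt_eqF.
    have -> : (1 - s / (s + t)) * t^-1 = (s + t)^-1 by field; rewrite st0 gt_eqF.
    by rewrite scalerDr.
  rewrite e; apply: hconv => //; apply/andP; split.
    by rewrite divr_ge0 // ltW // addr_gt0.
  by rewrite ler_pdivrMr ?addr_gt0 // mul1r lerDl ltW.
have h1 : forall t, S y t -> g (x + y) - t <= g x.
  move=> t St; apply: lb_le_inf; first exact: S_ne.
  by move=> s Ss; have := key s t Ss St; lra.
have : g (x + y) - g x <= g y.
  apply: lb_le_inf; first exact: S_ne.
  by move=> t St; have := h1 t St; lra.
lra.
Qed.

Lemma sigma_pos (z : 'rV[R]_d) : z != 0 -> 0 < skewness g.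
Proof.
move=> z0.
have [K [K0 HK]] := g_ubound; have [M [M0 HM]] := g_lbound.
have hub : has_ubound [set g x / g (- x) | x in [set x : 'rV[R]_d | x != 0]].
  exists (K * M) => _ [x /= x0 <-].
  have gp : 0 < g (- x) by apply: g_pos; rewrite oppr_eq0.
  rewrite ler_pdivrMr //.
  have h1 := HK x x0; have := HM (- x); rewrite normrN ler_pdivrMr // => h2.
  have h3 : 0 <= `|x| := normr_ge0 x.
  nra.
have : g z / g (- z) <= skewness g.
  by apply: (ub_le_sup hub); exists z.
apply: lt_le_trans; apply: divr_gt0; apply: g_pos => //; by rewrite oppr_eq0.
Qed.
End G.

Lemma sum_wsum (R : realType) (d : nat) (D C : {fset 'rV[R]_d}) (w v : 'rV[R]_d -> R)
  (F : 'rV[R]_d -> R) :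
  \sum_(s <- wsum_set D C) wsum_weight D w C v s * F s =
  \sum_(s <- D) w s * F s + \sum_(s <- C) v s * F s.
Proof.
have P : forall (A C' : {fset 'rV[R]_d}) (u : 'rV[R]_d -> R),
    \sum_(s <- (A `|` C')%fset) (if s \in A then u s else 0) * F s = \sum_(s <- A) u s * F s.
  move=> A C' u; rewrite -(big_fset_incl _ (fsubsetUl A C')); last first.
    by move=> x _ /negbTE ->; rewrite mul0r.
  by rewrite big_seq [RHS]big_seq; apply: eq_bigr => x ->.
rewrite /wsum_set /wsum_weight; under eq_bigr do rewrite mulrDl.
by rewrite big_split /= P fsetUC P.
Qed.

Lemma arith1 (R : realType) (p q r s u : R) :
  p + s * r <= q -> q - p <= u * r -> 0 < r -> u < s -> False.
Proof. move=> *; nra. Qed.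

Lemma arith2 (R : realType) (p q r s u : R) :
  q - p <= u * r -> u < s -> 0 <= r -> q <= p + s * r.
Proof. move=> *; nra. Qed.

Theorem mainTheorem20 (R : realType) (d : nat) (B : set 'rV[R]_d)
  (D : {fset 'rV[R]_d}) (w : 'rV[R]_d -> R) (a : 'rV[R]_d) :
  gauge_body B ->
  pos_weighted D w ->
  CL (minkowski_gauge B) D w a ->
  FW (minkowski_gauge B) (wsum_set D [fset a]%fset)
     (wsum_weight D w [fset a]%fset
        (fun _ => total_weight D w / skewness (minkowski_gauge B)))
  = [set a].
Proof.
move=> hB hw [C [v [Cne vpos hlt hFW]]].
set g := minkowski_gauge B.
set t := total_weight D w / skewness g.
set fD := fun y => \sum_(s <- D) w s * g (y - s).
have eqF : forall y, \sum_(s <- wsum_set D [fset a]%fset)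
    wsum_weight D w [fset a]%fset (fun _ => t) s * g (y - s) = fD y + t * g (y - a).
  by move=> y; rewrite (sum_wsum _ _ _ _ (fun s => g (y - s))) big_seq_fset1.
have key : forall y, fD a - fD y <= total_weight C v * g (y - a).
  move=> y; have := hFW y.
  rewrite !(sum_wsum _ _ _ _ (fun s => g (_ - s))) -/(fD a) -/(fD y).
  have : \sum_(c <- C) v c * g (y - c) <=
      total_weight C v * g (y - a) + \sum_(c <- C) v c * g (a - c).
    rewrite /total_weight big_distrl -big_split /= big_seq [X in _ <= X]big_seq.
    apply: ler_sum => c cC; rewrite -mulrDr; apply: ler_wpM2l; first exact: ltW (vpos c cC).
    have -> : y - c = (y - a) + (a - c) by rewrite addrA subrK.
    exact: (g_tri hB).
  lra.
have vt : forall z : 'rV[R]_d, z != 0 -> total_weight C v < t.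
  move=> z z0; rewrite /t ltr_pdivlMr; first by rewrite mulrC.
  exact: (sigma_pos hB z0).
have vC0 : 0 <= total_weight C v.
  by rewrite /total_weight big_seq; apply: sumr_ge0 => c cC; rewrite ltW ?vpos.
have g00 : g 0 = 0 := g0 hB.
apply/seteqP; split => x /=.
  move=> Hx; case: (eqVneq x a) => // xa.
  have := Hx a; rewrite !eqF subrr g00 mulr0 addr0 => h1.
  have h2 := key x.
  have gp : 0 < g (x - a) by apply: (g_pos hB); rewrite subr_eq0.
  have h3 : total_weight C v < t by apply: (vt (x - a)); rewrite subr_eq0.
  by case: (arith1 h1 h2 gp h3).
move=> -> y; rewrite !eqF subrr g00 mulr0 addr0.
case: (eqVneq y a) => [->|ya]; first by rewrite subrr g00 mulr0 addr0.
have h2 := key y.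
have h3 : total_weight C v < t by apply: (vt (y - a)); rewrite subr_eq0.
have h4 : 0 <= g (y - a) := g_ge0 hB (y - a).
exact: (arith2 h2 h3 h4).
Qed.
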